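(* Let $e>1$ be odd, $t\ge0$ an integer, $\mathbf c=(t+(1-e)/2,0)$ and $\mu=(\mu^1,\mu^2)$ a bipartition. Then the partition associated to the $1$-runner abacus $\mathfrak A_e(\mu,\mathbf c)=\{2j+e: j\in\mathfrak B(\mu,\mathbf c)^1\}\cup\{2j: j\in\mathfrak B(\mu,\mathbf c)^2\}$ equals $\Phi_t(\mu)$.
   Context: A $1$-runner abacus is a subset $\mathfrak A\subseteq\mathbb Z$ such that for some $n\ge1$, $-j\in\mathfrak A$ and $j\notin\mathfrak A$ for all $j\ge n$. List its elements $a_1>a_2>\cdots$; holes are elements of $\mathbb Z\setminus\mathfrak A$; $\lambda_j$ is the number of holes less than $a_j$, and $(\lambda_1,\lambda_2,\dots)$ is the partition associated to $\mathfrak A$; its charge is $a_1-\lambda_1$. For a bipartition $\mu$ and $\mathbf c=(c_1,c_2)\in\mathbb Z^2$ the symbol is $\mathfrak B(\mu,\mathbf c)=(\mathfrak B^1,\mathfrak B^2)$ with $\mathfrak B^i=\{\mu^i_j-j+c_i+1: j\ge1\}$ (parts $\mu^i_j=0$ beyond the length). $\Delta_t=(t,t-1,\dots,1)$. $2$-quotient convention: for a partition $\lambda$ take a $\beta$-set $B$ of $\lambda$ (the set $\{\lambda_i+N-i:1\le i\le N\}$, $N$ at least the number of parts) with $|B|$ odd, put $B^0=\{x/2:x\in B\text{ even}\}$, $B^1=\{(x-1)/2: x\in B\text{ odd}\}$, and $\lambda^{(2)}=(\text{partition with }\beta\text{-set }B^0,\ \text{partition with }\beta\text{-set }B^1)$.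 For $\lambda$ with $2$-core $\Delta_t$ and $\lambda^{(2)}=(\nu^1,\nu^2)$, $\bar\lambda^{(2)}=(\nu^1,\nu^2)$ if $t$ is even and $(\nu^2,\nu^1)$ if $t$ is odd. $\Phi_t(\mu)$ is the unique partition $\lambda$ with $2$-core $\Delta_t$ and $\bar\lambda^{(2)}=\mu$. *)

(* Defs.v *)
From HB Require Import structures.
From mathcomp Require Import all_boot all_order all_algebra.
From mathcomp Require Import zify.
Set Implicit Arguments. Unset Strict Implicit. Unset Printing Implicit Defensive.
Import Order.TTheory GRing.Theory Num.Theory.

(* A partition is a weakly decreasing list of positive naturals;
   parts beyond the length are 0 (read with nth 0). *)
Definition is_partition (l : seq nat) : bool :=
  sorted geq l && all (fun x => 0 < x) l.

Definition Delta (t : nat) : seq nat := [seq t - i | i <- iota 0 t].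

(* nu is obtained from lam by removing a rim 2-hook: the skew diagram
   lam/nu consists of two adjacent cells, either in one row (cells (i,nu_i),
   (i,nu_i+1)) or in one column (cells (i,nu_i),(i+1,nu_{i+1}) with
   nu_i = nu_{i+1}), and nu is a partition. *)
Definition remove_domino (lam nu : seq nat) : Prop :=
  is_partition lam /\ is_partition nu /\
  exists i : nat,
    (nth 0 lam i = (nth 0 nu i).+2 /\
       forall k, k != i -> nth 0 lam k = nth 0 nu k) \/
    (nth 0 lam i = (nth 0 nu i).+1 /\ nth 0 lam i.+1 = (nth 0 nu i.+1).+1 /\
       nth 0 nu i = nth 0 nu i.+1 /\
       forall k, k != i -> k != i.+1 -> nth 0 lam k = nth 0 nu k).

Inductive domino_reach : seq nat -> seq nat -> Prop :=
  | dr_refl l : domino_reach l l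
  | dr_step l m n : remove_domino l m -> domino_reach m n -> domino_reach l n.

Definition two_core_is (lam kappa : seq nat) : Prop :=
  domino_reach lam kappa /\ forall nu, ~ remove_domino kappa nu.

Definition betaset (N : nat) (lam : seq nat) : seq nat :=
  [seq nth 0 lam i + N - i.+1 | i <- iota 0 N].

Definition beta_partition (B : seq nat) : seq nat :=
  let s := sort geq (undup B) in
  [seq x <- [seq nth 0 s i - (size s - i.+1) | i <- iota 0 (size s)] | 0 < x].

(* 2-quotient, computed from the beta-set with N = 2*size(lam)+1 (odd,
   >= number of parts) beads *)
Definition quot2 (lam : seq nat) : seq nat * seq nat :=
  let B := betaset (size lam).*2.+1 lam in
  (beta_partition [seq x./2 | x <- B & ~~ odd x],
   beta_partition [seq (x.-1)./2 | x <- B & odd x]).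

Definition bar_quot2 (t : nat) (lam : seq nat) : seq nat * seq nat :=
  if odd t then ((quot2 lam).2, (quot2 lam).1) else quot2 lam.

Definition Phi_spec (t : nat) (mu : seq nat * seq nat) (lam : seq nat) : Prop :=
  two_core_is lam (Delta t) /\ bar_quot2 t lam = mu.

Local Open Scope ring_scope.

Definition in_symbol (mu : seq nat) (c : int) (x : int) : Prop :=
  exists j : nat, (1 <= j)%N /\ x = (nth 0%N mu j.-1)%:Z - j%:Z + c + 1.

Definition in_symbolb (mu : seq nat) (c : int) (x : int) : bool :=
  (x <= c - (size mu)%:Z) ||
  has (fun j : nat => x == (nth 0%N mu j.-1)%:Z - j%:Z + c + 1) (iota 1 (size mu)).

Lemma in_symbolP mu c x : reflect (in_symbol mu c x) (in_symbolb mu c x).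
Proof.
apply: (iffP idP).
- case/orP=> [hx|/hasP[j]].
  + exists (absz (c - x + 1)); split; first by lia.
    rewrite nth_default; last by lia.
    lia.
  + rewrite mem_iota => /andP[j1 _] /eqP ->; by exists j.
- case=> j [j1 ->]; rewrite /in_symbolb.
  case: (ltnP (size mu) j) => hj.
  + by rewrite nth_default; [apply/orP; left; lia | lia].
  + apply/orP; right; apply/hasP; exists j => //.
    by rewrite mem_iota; apply/andP; split; lia.
Qed.

Definition abacus_e (e : nat) (mu : seq nat * seq nat) (c : int * int) (x : int) : Prop :=
  (exists j, in_symbol mu.1 c.1 j /\ x = 2 * j + e%:Z) \/
  (exists j, in_symbol mu.2 c.2 j /\ x = 2 * j).

Definition abacus_eb (e : nat) (mu : seq nat * seq nat) (c : int * int) (x : int) : bool :=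
  ((2 %| x - e%:Z)%Z && in_symbolb mu.1 c.1 ((x - e%:Z) %/ 2)%Z) ||
  ((2 %| x)%Z && in_symbolb mu.2 c.2 (x %/ 2)%Z).

Lemma abacus_ebP e mu c x : reflect (abacus_e e mu c x) (abacus_eb e mu c x).
Proof.
apply: (iffP idP).
- case/orP=> /andP[hd /in_symbolP hs]; move: hd; rewrite dvdz_eq => /eqP hd.
  + left; exists ((x - e%:Z) %/ 2)%Z; split=> //.
    by rewrite mulrC hd addrNK.
  + right; exists (x %/ 2)%Z; split=> //; by rewrite mulrC hd.
- case=> [[j [hj ->]]|[j [hj ->]]]; apply/orP.
  + left; rewrite addrK dvdz_mulr //= mulKz //; exact/in_symbolP.
  + right; rewrite dvdz_mulr //= mulKz //; exact/in_symbolP.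
Qed.

Definition is_1runner_abacus (A : pred int) (n : nat) : Prop :=
  (1 <= n)%N /\ forall j : nat, (n <= j)%N -> A (- j%:Z) /\ ~~ A j%:Z.

Definition window (n : nat) : seq int := [seq k%:Z - n%:Z | k <- iota 0 (n.*2.+1)].

(* For an abacus with bound n: its elements a_1 > a_2 > ... lying in [-n, n]
   (all larger integers are holes; everything below is a bead, with lambda_j = 0) *)
Definition abacus_elems (A : pred int) (n : nat) : seq int :=
  sort (fun x y : int => y <= x) [seq x <- window n | A x].

(* lambda_j = number of holes less than a_j (all holes are >= -n);
   trailing zero parts are dropped *)
Definition abacus_partition (A : pred int) (n : nat) : seq nat :=
  [seq l <- [seq count (fun h => (h < a) && ~~ A h) (window n) | a <- abacus_elems A n]
     | (0 < l)%N].

(* Main.v *)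
Require Import Defs.
From mathcomp Require Import all_boot all_order all_algebra zify.
Import Order.TTheory GRing.Theory Num.Theory.
Set Implicit Arguments. Unset Strict Implicit. Unset Printing Implicit Defensive.
Local Open Scope ring_scope.

Definition S (lam : seq nat) (c : int) (x : int) : Prop :=
  exists k : nat, x = (nth 0%N lam k)%:Z - k%:Z + c.

Lemma in_symbolE lam c x : in_symbol lam c x <-> S lam c x.
Proof.
split=> [[j [j1 ->]]|[k ->]].
- exists j.-1; have -> : j = j.-1.+1 by lia. rewrite /= ; lia.
- exists k.+1; split => //=; lia.
Qed.

Lemma in_symbolbE lam c x : in_symbolb lam c x <-> S lam c x.
Proof. rewrite -in_symbolE; split=> [/in_symbolP|/in_symbolP] //. Qed.

Lemma S_shift lam c d x : S lam (c + d) (x + d) <-> S lam c x.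
Proof. split=> [[k hk]|[k hk]]; exists k; lia. Qed.

Lemma S_eqnth lam lam' c x : (forall i, nth 0%N lam i = nth 0%N lam' i) ->
  S lam c x <-> S lam' c x.
Proof. move=> h; split=> [[k hk]|[k hk]]; exists k; rewrite ?h in hk *; lia. Qed.

Lemma S_nil c x : S [::] c x <-> x <= c.
Proof.
split=> [[k ->]|hx]; first by rewrite nth_nil; lia.
exists (absz (c - x)); rewrite nth_nil; lia.
Qed.

Lemma part_nth lam : is_partition lam -> forall i, (nth 0%N lam i.+1 <= nth 0%N lam i)%N.
Proof.
case/andP=> hs _ i; case: (ltnP i.+1 (size lam)) => hi.
- by move/sortedP: hs => /(_ 0%N i hi).
- by rewrite (nth_default _ hi).
Qed.

Lemma part_mono lam : is_partition lam -> forall i j, (i <= j)%N -> (nth 0%N lam j <= nth 0%N lam i)%N.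
Proof.
move=> hp i j /subnKC <-; elim: (j - i)%N => [|d IH]; first by rewrite addn0.
rewrite addnS; exact: leq_trans (part_nth hp _) IH.
Qed.

Lemma part_pos lam : is_partition lam -> forall i, (i < size lam)%N -> (0 < nth 0%N lam i)%N.
Proof. by case/andP=> _ /allP ha i hi; apply: ha; rewrite mem_nth. Qed.

Lemma sortedP_geq (l : seq nat) : sorted geq l <-> forall i, (nth 0%N l i.+1 <= nth 0%N l i)%N.
Proof.
split=> [hs i|h].
- case: (ltnP i.+1 (size l)) => hi.
  + by move/sortedP: hs => /(_ 0%N i hi).
  + by rewrite (nth_default _ hi).
- by apply/(sortedP 0%N) => i _; exact: h.
Qed.

Lemma fpos_nth (l : seq nat) : sorted geq l ->
  forall i, nth 0%N [seq x <- l | (0 < x)%N] i = nth 0%N l i.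
Proof.
elim: l => [//|a l IH] hs i /=.
have hl : sorted geq l by move: hs; rewrite /=; case: l {IH} => //= b l /andP[].
case: (posnP a) => [a0|apos].
- have ha : all (geq a) l.
    apply: (order_path_min (leT:=geq)) => //; move=> x y z /= h1 h2; exact: leq_trans h2 h1.
  move: ha; rewrite a0 => ha.
  have -> : [seq x <- l | (0 < x)%N] = [::].
    apply/eqP; rewrite -(negbK (_ == _)) -has_filter; apply/hasPn => x /(allP ha) /=.
    by rewrite leqn0 => /eqP ->.
  case: i => [//|i] /=.
  case: (ltnP i (size l)) => hi; last by rewrite nth_default.
  by move/allP: ha => /(_ _ (mem_nth 0%N hi)) /= h; lia.
- by case: i => [//|i] /=; rewrite IH.
Qed.

Lemma fpos_part (l : seq nat) : sorted geq l -> is_partition [seq x <- l | (0 < x)%N].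
Proof.
move=> hs; apply/andP; split.
  apply: sorted_filter => //; move=> x y z /= h1 h2; exact: leq_trans h2 h1.
by apply/allP=> x; rewrite mem_filter => /andP[].
Qed.

Lemma S_dec lam c x :
  S lam c x <-> x = (nth 0%N lam 0)%:Z + c \/ S (behead lam) (c - 1) x.
Proof.
split=> [[[|k] ->]|[->|[k ->]]].
- left; lia.
- right; exists k; rewrite nth_behead; lia.
- by exists 0%N; lia.
- exists k.+1; rewrite nth_behead; lia.
Qed.

Lemma S_max lam c x : is_partition lam -> S lam c x -> x <= (nth 0%N lam 0)%:Z + c.
Proof. move=> hp [k ->]; have := part_mono hp (leq0n k); lia. Qed.

Lemma S_behead_lt lam c x : is_partition lam -> S (behead lam) (c - 1) x ->
  x < (nth 0%N lam 0)%:Z + c.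
Proof. move=> hp [k ->]; rewrite nth_behead; have := part_mono hp (leq0n k.+1); lia. Qed.

Lemma part_behead lam : is_partition lam -> is_partition (behead lam).
Proof.
case: lam => [//|a l] /andP[hs ha]; apply/andP; split.
- exact: path_sorted hs.
- by move: ha => /= /andP[].
Qed.

Lemma S_head lam c : S lam c ((nth 0%N lam 0)%:Z + c).
Proof. by exists 0%N; lia. Qed.

Lemma S_inj_aux n lam lam' c c' : (size lam + size lam' <= n)%N ->
  is_partition lam -> is_partition lam' ->
  (forall x, S lam c x <-> S lam' c' x) -> lam = lam' /\ c = c'.
Proof.
elim: n lam lam' c c' => [|n IH] lam lam' c c' hn hp hp' heq;
have e1 : (nth 0%N lam 0)%:Z + c = (nth 0%N lam' 0)%:Z + c'
  by have := S_max hp' (proj1 (heq _) (S_head lam c));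
     have := S_max hp (proj2 (heq _) (S_head lam' c')); lia.
- by case: lam hn hp e1 heq => //; case: lam' hp' => //= *; split=> //; lia.
- case E : (size lam + size lam')%N => [|m].
    by case: lam E hn hp e1 heq => //; case: lam' hp' => //= *; split=> //; lia.
  have heq' : forall x, S (behead lam) (c - 1) x <-> S (behead lam') (c' - 1) x.
    move=> x; split=> h.
    + have hl := S_behead_lt hp h.
      have : S lam' c' x by apply/heq/S_dec; right.
      by case/S_dec => // hx; lia.
    + have hl := S_behead_lt hp' h.
      have : S lam c x by apply/heq/S_dec; right.
      by case/S_dec => // hx; lia.
  have hsz : (size (behead lam) + size (behead lam') <= n)%N
    by rewrite !size_behead; lia.
  have [hb hc] := IH _ _ _ _ hsz (part_behead hp) (part_behead hp') heq'.
  have cc : c = c' by lia.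
  split => //; subst c'.
  have h0 : nth 0%N lam 0 = nth 0%N lam' 0 by lia.
  clear E hn heq heq' e1 hsz IH.
  case: lam hp hb h0 => [|a l]; case: lam' hp' => [|a' l'] //= hp' hp.
  + by move=> _ h0; have := part_pos hp' (ltn0Sn _) => /=; rewrite -h0.
  + by move=> _ h0; have := part_pos hp (ltn0Sn _) => /=; rewrite h0.
  + by move=> -> ->.
Qed.

Lemma S_inj lam lam' c c' : is_partition lam -> is_partition lam' ->
  (forall x, S lam c x <-> S lam' c' x) -> lam = lam' /\ c = c'.
Proof. exact: S_inj_aux. Qed.

Fixpoint rawi (L : int) (s : seq int) : seq nat :=
  match s with [::] => [::] | a :: s' => (absz (a - L) - size s')%N :: rawi L s' end.

Definition sdec (s : seq int) := sorted (fun a b : int => b < a) s.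

Lemma S_ceq lam c c' x : c = c' -> S lam c x <-> S lam c' x.
Proof. by move=> ->. Qed.

Lemma sdec_cons a s : sdec (a :: s) -> sdec s /\ all (fun b => b < a) s.
Proof.
move=> h; split; first exact: path_sorted h.
apply: (order_path_min (leT := fun a b : int => b < a)) => //.
move=> x y z /= h1 h2; exact: lt_trans h2 h1.
Qed.

Lemma sdec_head L a s : sdec (a :: s) -> all (fun x => L <= x) (a :: s) ->
  L + (size s)%:Z <= a.
Proof.
elim: s a => [|b s IH] a hs ha /=; first by move: ha => /= /andP[]; lia.
have [hs' hlt] := sdec_cons hs.
have := IH b hs'; move: ha => /= /andP[_ ->] /(_ isT).
by move: hlt => /= /andP[]; lia.
Qed.

Lemma rawi_sorted L s : sdec s -> all (fun x => L <= x) s -> sorted geq (rawi L s).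
Proof.
elim: s => [//|a s IH] hs ha /=.
have [hs' hlt] := sdec_cons hs.
move: ha => /= /andP[hLa ha].
case: s IH hs hs' hlt ha => [//|b s] IH hs hs' hlt ha /=.
have := IH hs' ha; rewrite /= => ->; rewrite andbT.
have := sdec_head hs' ha; move: hlt => /= /andP[hab _] hb; rewrite /geq /=; lia.
Qed.

Lemma rawi_S L s x : sdec s -> all (fun x => L <= x) s ->
  S (rawi L s) (L + (size s)%:Z - 1) x <-> x < L \/ x \in s.
Proof.
elim: s => [|a s IH] hs ha /=.
  rewrite S_nil in_nil; split; [lia|case=> //; lia].
have [hs' _] := sdec_cons hs.
have hh := sdec_head hs ha.
move: ha => /= /andP[hLa ha].
rewrite S_dec /= in_cons.
rewrite (S_ceq _ _ (_ : _ = L + (size s)%:Z - 1)); last by lia.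
rewrite IH //.
split.
- case=> [hx|[h|h]]; [right; apply/orP; left; apply/eqP; lia|by left|by right; rewrite h orbT].
- case=> [h|/orP[/eqP ->|h]]; [by right; left|left; lia|by right; right].
Qed.

Definition partof (L : int) (s : seq int) := [seq x <- rawi L s | (0 < x)%N].

Lemma partof_part L s : sdec s -> all (fun x => L <= x) s -> is_partition (partof L s).
Proof. by move=> *; apply: fpos_part; apply: rawi_sorted. Qed.

Lemma partof_S L s x : sdec s -> all (fun x => L <= x) s ->
  S (partof L s) (L + (size s)%:Z - 1) x <-> x < L \/ x \in s.
Proof.
move=> hs ha; rewrite -rawi_S //; apply: S_eqnth => i.
by rewrite fpos_nth //; apply: rawi_sorted.
Qed.

Lemma maya (P : int -> bool) (L H : int) : L <= H ->
  (forall x, x < L -> P x) -> (forall x, H < x -> ~~ P x) ->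
  exists lam c, is_partition lam /\ forall x, S lam c x <-> P x.
Proof.
move=> hLH hlo hhi.
set W := [seq H - k%:Z | k <- iota 0 (absz (H - L + 1))].
set s := [seq x <- W | P x].
have hW : sdec W.
  rewrite /sdec sorted_map; apply: (sub_sorted _ (iota_ltn_sorted _ _)).
  by move=> i j /= h; lia.
have hs : sdec s.
  apply: sorted_filter => //; move=> x y z /= h1 h2; exact: lt_trans h2 h1.
have memW : forall x, x \in W = (L <= x <= H).
  move=> x; apply/mapP/idP.
  - by case=> k; rewrite mem_iota => hk ->; lia.
  - move=> hx; exists (absz (H - x)); last by lia.
    by rewrite mem_iota; lia.
have ha : all (fun x => L <= x) s.
  by apply/allP => x; rewrite mem_filter memW => /andP[_ /andP[]].
exists (partof L s), (L + (size s)%:Z - 1); split; first exact: partof_part.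
move=> x; rewrite partof_S // mem_filter memW.
case: (boolP (x < L)) => hx; first by split=> _; [apply: hlo|left].
case: (boolP (x <= H)) => hx2.
- split; first by case=> [//|/andP[]].
  by move=> ->; right; apply/andP; split=> //; lia.
- split; first by case=> [//|/andP[_ h]]; lia.
  by move=> hP; move: (hhi x); rewrite hP => /(_ _)/negP; lia.
Qed.

Lemma rawi_nat (s : seq nat) :
  rawi 0 (map Posz s) = [seq (nth 0%N s i - (size s - i.+1))%N | i <- iota 0 (size s)].
Proof.
elim: s => [//|a s IH] /=.
rewrite IH size_map; congr cons; first by lia.
rewrite -[in RHS](addn0 1%N) iotaDl -map_comp; apply: eq_map => i /=.
by rewrite add1n subSS.
Qed.

Lemma beta_partitionE (B : seq nat) :
  beta_partition B = partof 0 (map Posz (sort geq (undup B))).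
Proof. by rewrite /beta_partition /partof rawi_nat. Qed.

Lemma sort_geq_sdec (B : seq nat) : sdec (map Posz (sort geq (undup B))).
Proof.
rewrite /sdec sorted_map.
have : sorted gtn (sort geq (undup B)).
  rewrite gtn_sorted_uniq_geq sort_uniq undup_uniq /=.
  by apply: sort_sorted => x y; rewrite /geq; apply: leq_total.
by apply: sub_sorted => x y /=; lia.
Qed.

Lemma bpS (B : seq nat) x :
  S (beta_partition B) ((size (undup B))%:Z - 1) x <-> x < 0 \/ (0 <= x /\ (absz x) \in B).
Proof.
rewrite beta_partitionE.
rewrite (S_ceq _ _ (_ : _ = 0 + (size (map Posz (sort geq (undup B))))%:Z - 1)); last first.
  by rewrite size_map size_sort.
rewrite partof_S; first last.
- by apply/allP => y /mapP [z _ ->].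
- exact: sort_geq_sdec.
case: (boolP (x < 0)) => hx; first by split=> _; left.
split.
- case=> [//|/mapP [z hz ->]]; right; split => //.
  by rewrite /= -(mem_undup B) -(mem_sort geq).
- case=> [//|[h0 hB]]; right; apply/mapP; exists (absz x); last by lia.
  by rewrite mem_sort mem_undup.
Qed.

Lemma bp_eq (B : seq nat) mu c : is_partition mu ->
  (forall y : nat, y \in B <-> S mu c y%:Z) -> (forall x, x < 0 -> S mu c x) ->
  beta_partition B = mu.
Proof.
move=> hp hB hneg.
have hpB : is_partition (beta_partition B).
  rewrite beta_partitionE; apply: partof_part; first exact: sort_geq_sdec.
  by apply/allP => y /mapP [z _ ->].
have [] := S_inj hpB hp (c := (size (undup B))%:Z - 1) (c' := c); last by [].
move=> x; rewrite bpS; split.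
- case=> [/hneg //|[h0 /hB]]; by rewrite gez0_abs.
- move=> h; case: (boolP (x < 0)) => hx; first by left.
  right; split; first lia.
  by apply/hB; rewrite gez0_abs //; lia.
Qed.

Lemma sdec_of_sorted (s : seq int) : sorted (fun x y : int => y <= x) s -> uniq s -> sdec s.
Proof.
elim: s => [//|a s IH] /= hs /andP[ha hu].
case: s IH hs ha hu => [//|b s] IH /= /andP[hab hs] ha hu.
have := IH hs hu; rewrite /sdec /= => ->; rewrite andbT.
rewrite lt_neqAle hab andbT; apply/eqP => hba; move: ha; rewrite hba in_cons eqxx //.
Qed.

Lemma mem_window n x : x \in window n = (- n%:Z <= x <= n%:Z).
Proof.
apply/mapP/idP.
- by case=> k; rewrite mem_iota => hk ->; lia.
- move=> hx; exists (absz (x + n%:Z)); last by lia.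
  by rewrite mem_iota; lia.
Qed.

Lemma window_uniq n : uniq (window n).
Proof.
rewrite map_inj_uniq ?iota_uniq // => i j /= h; lia.
Qed.

Lemma count_lt_iota b m : count (fun k => (k < b)%N) (iota 0 m) = minn b m.
Proof.
elim: m => [|m IH]; first by rewrite minn0.
rewrite -addn1 iotaD count_cat IH /= add0n; lia.
Qed.

Lemma count_lt_window n a : - n%:Z <= a <= n%:Z ->
  count (fun h => h < a) (window n) = absz (a + n%:Z).
Proof.
move=> ha; rewrite count_map.
rewrite (eq_count (a2 := fun k => (k < absz (a + n%:Z)%R)%N)); last by move=> k /=; lia.
rewrite count_lt_iota; lia.
Qed.

Lemma count_split (T : Type) (p q : pred T) s :
  count p s = (count (fun x => p x && q x) s + count (fun x => p x && ~~ q x) s)%N.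
Proof. elim: s => [//|x s IH] /=; rewrite IH; case: (p x); case: (q x) => /=; lia. Qed.

Lemma rawi_count n (E : seq int) : sdec E ->
  [seq (absz (a + n%:Z)%R - count (fun h => h < a)%R E)%N | a <- E] = rawi (- n%:Z) E.
Proof.
elim: E => [//|a E IH] hs /=.
have [hs' hlt] := sdec_cons hs.
rewrite ltxx /= add0n.
have -> : count (fun h => h < a) E = size E.
  rewrite -count_predT; apply: eq_in_count => x hx; exact: (allP hlt x hx).
congr cons; first by congr (_ - _)%N; lia.
rewrite -IH //; apply/eq_in_map => b hb /=.
by have := allP hlt b hb => /= hba; rewrite (_ : (a < b) = false) //; apply/negbTE; rewrite -leNgt ltW.
Qed.

Lemma abacus_partE (A : pred int) n :
  abacus_partition A n = partof (- n%:Z) (abacus_elems A n).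
Proof.
set E := abacus_elems A n.
have hE : sdec E.
  apply: sdec_of_sorted; first by apply: sort_sorted => x y; exact: le_total.
  by rewrite sort_uniq filter_uniq // window_uniq.
rewrite /abacus_partition /partof -/E -rawi_count //; congr filter.
apply/eq_in_map => a.
rewrite mem_sort mem_filter mem_window => /andP[hA ha].
have := count_split (fun h => h < a) A (window n).
rewrite count_lt_window // -count_filter.
rewrite -(count_sort (fun x y : int => y <= x)) -/(abacus_elems A n) -/E.
set u := count _ E; set v := count _ (window n); lia.
Qed.

Lemma abacus_S (A : pred int) n : is_1runner_abacus A n ->
  is_partition (abacus_partition A n) /\
  forall x, S (abacus_partition A n)
     (- n%:Z + (size (abacus_elems A n))%:Z - 1) x <-> A x.
Proof.
case=> hn hA.
set E := abacus_elems A n.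
have hE : sdec E.
  apply: sdec_of_sorted; first by apply: sort_sorted => x y; exact: le_total.
  by rewrite sort_uniq filter_uniq // window_uniq.
have hall : all (fun x => - n%:Z <= x) E.
  by apply/allP => x; rewrite mem_sort mem_filter mem_window => /andP[_ /andP[]].
rewrite abacus_partE; split; first exact: partof_part.
move=> x; rewrite partof_S // mem_sort mem_filter mem_window.
case: (boolP (x < - n%:Z)) => hx.
- split=> [_|_]; last by left.
  have hj : (n <= absz x)%N by lia.
  have [h1 _] := hA (absz x) hj.
  by rewrite (_ : - (absz x)%:Z = x) in h1 => //; lia.
- case: (boolP (x <= n%:Z)) => hx2.
  + split; [case=> // /andP[] //|move=> ->; right; apply/andP; split=> //; lia].
  + split; first by case=> // /andP[_] /andP[_].
    have hj : (n <= absz x)%N by lia.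
    have [_ h2] := hA (absz x) hj.
    by rewrite (_ : (absz x)%:Z = x) in h2; [move=> h; rewrite h in h2|lia].
Qed.

Lemma S_low lam c y : y <= c - (size lam)%:Z -> S lam c y.
Proof. by move=> h; exists (absz (c - y)); rewrite nth_default; lia. Qed.

Lemma mem_betaset N lam (y : nat) : (size lam <= N)%N ->
  y \in betaset N lam <-> S lam (N%:Z - 1) y%:Z.
Proof.
move=> hN; split.
- by case/mapP => i; rewrite mem_iota => hi ->; exists i; lia.
- case=> k hk; apply/mapP; exists k.
  + rewrite mem_iota /=; case: (ltnP k N) => // hkN.
    by move: hk; rewrite nth_default; lia.
  + lia.
Qed.

Lemma mem_B0 (B : seq nat) (z : nat) :
  z \in [seq x./2 | x <- B & ~~ odd x] <-> (z.*2)%N \in B.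
Proof.
split.
- case/mapP => x; rewrite mem_filter => /andP[hx hB] ->.
  by have := odd_double_half x; rewrite (negbTE hx) add0n => ->.
- move=> h; apply/mapP; exists z.*2; last by rewrite doubleK.
  by rewrite mem_filter odd_double h.
Qed.

Lemma mem_B1 (B : seq nat) (z : nat) :
  z \in [seq (x.-1)./2 | x <- B & odd x] <-> (z.*2.+1)%N \in B.
Proof.
split.
- case/mapP => x; rewrite mem_filter => /andP[hx hB] ->.
  have := odd_double_half x; rewrite hx => hx2.
  suff -> : x.-1./2.*2.+1 = x by [].
  by rewrite -{1}hx2 add1n /= doubleK.
- move=> h; apply/mapP; exists z.*2.+1; last by rewrite /= doubleK.
  by rewrite mem_filter /= odd_double h.
Qed.

Lemma S_eq2 lam c c' x x' : c = c' -> x = x' -> S lam c x <-> S lam c' x'.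
Proof. by move=> -> ->. Qed.

Lemma quot_fst lam al a : is_partition lam -> is_partition al ->
  (forall z : int, S lam ((size lam).*2%:Z) (2 * z) <-> S al a z) ->
  (quot2 lam).1 = al.
Proof.
move=> hp hal h; rewrite /quot2; apply: (bp_eq (c := a)) => //.
- move=> y; rewrite mem_B0 mem_betaset; last by lia.
  rewrite -h; apply: S_eq2; lia.
- move=> x hx; apply/h; apply: S_low; lia.
Qed.

Lemma quot_snd lam al a : is_partition lam -> is_partition al ->
  (forall z : int, S lam ((size lam).*2%:Z) (2 * z + 1) <-> S al a z) ->
  (quot2 lam).2 = al.
Proof.
move=> hp hal h; rewrite /quot2; apply: (bp_eq (c := a)) => //.
- move=> y; rewrite mem_B1 mem_betaset; last by lia.
  rewrite -h; apply: S_eq2; lia.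
- move=> x hx; apply/h; apply: S_low; lia.
Qed.

Lemma S_diff lam c x c' x' : c - x = c' - x' -> S lam c x <-> S lam c' x'.
Proof. move=> h; split=> [[k hk]|[k hk]]; exists k; lia. Qed.

Lemma int_par (c : int) : exists m : int,
  (c = 2 * m /\ ~~ odd (absz c)) \/ (c = 2 * m + 1 /\ odd (absz c)).
Proof.
case: (boolP (odd (absz c))) => h.
- exists ((c - 1) %/ 2)%Z; right; split => //; lia.
- exists (c %/ 2)%Z; left; split => //; lia.
Qed.

Lemma quot_runners lam c al a be b :
  is_partition lam -> is_partition al -> is_partition be ->
  (forall w, S lam c (2 * w) <-> S al a w) ->
  (forall w, S lam c (2 * w + 1) <-> S be b w) ->
  quot2 lam = if odd (absz c) then (be, al) else (al, be).
Proof.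
move=> hp hal hbe h0 h1.
set k : int := (size lam)%:Z.
have [m [[hc hpar]|[hc hpar]]] := int_par c; rewrite ?(negbTE hpar) ?hpar.
- rewrite [quot2 lam]surjective_pairing.
  rewrite (quot_fst (a := a + (k - m)) hp hal) ?(quot_snd (a := b + (k - m)) hp hbe) //.
  + move=> z; rewrite (S_diff _ (c' := c) (x' := 2 * (z - (k - m)) + 1)); last by lia.
    by rewrite h1; apply: S_diff; lia.
  + move=> z; rewrite (S_diff _ (c' := c) (x' := 2 * (z - (k - m)))); last by lia.
    by rewrite h0; apply: S_diff; lia.
- rewrite [quot2 lam]surjective_pairing.
  rewrite (quot_fst (a := b + (k - m)) hp hbe) ?(quot_snd (a := a + (k - m - 1)) hp hal) //.
  + move=> z; rewrite (S_diff _ (c' := c) (x' := 2 * (z - (k - m - 1)))); last by lia.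
    by rewrite h0; apply: S_diff; lia.
  + move=> z; rewrite (S_diff _ (c' := c) (x' := 2 * (z - (k - m)) + 1)); last by lia.
    by rewrite h1; apply: S_diff; lia.
Qed.

Lemma e_lt lam k k' : is_partition lam -> (k < k')%N ->
  (nth 0%N lam k')%:Z - k'%:Z < (nth 0%N lam k)%:Z - k%:Z.
Proof. move=> hp hk; have := part_mono hp (ltnW hk); lia. Qed.

Lemma e_le lam k k' : is_partition lam -> (k <= k')%N ->
  (nth 0%N lam k')%:Z - k'%:Z <= (nth 0%N lam k)%:Z - k%:Z.
Proof. move=> hp hk; have := part_mono hp hk; lia. Qed.

Lemma e_inj lam k k' : is_partition lam ->
  (nth 0%N lam k')%:Z - k'%:Z = (nth 0%N lam k)%:Z - k%:Z -> k = k'.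
Proof.
move=> hp h; case: (ltngtP k k') => // hk.
- by have := e_lt hp hk; lia.
- by have := e_lt hp hk; lia.
Qed.

Definition moved (P : int -> Prop) (x d : int) (y : int) : Prop :=
  (P y /\ y <> x) \/ y = x - d.

Lemma hdom lam nu i c : is_partition lam -> is_partition nu ->
  nth 0%N lam i = (nth 0%N nu i).+2 ->
  (forall k, k != i -> nth 0%N lam k = nth 0%N nu k) ->
  let x := (nth 0%N lam i)%:Z - i%:Z + c in
  ~ S lam c (x - 2) /\ forall y, S nu c y <-> moved (S lam c) x 2 y.
Proof.
move=> hp hn hi ho x; subst x; split.
- case=> k hk.
  case: (ltngtP k i) => hki.
  + by have := e_lt hp hki; lia.
  + have hg := part_mono hn hki.
    have hk' : k != i by rewrite neq_ltn hki orbT.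
    rewrite (ho _ hk') in hk.
    have := part_nth hn i; lia.
  + by subst k; lia.
- move=> y; split.
  + case=> k ->; case: (eqVneq k i) => [->|hki]; first by right; lia.
    left; split; first by exists k; rewrite ho.
    rewrite -ho // => h; have : k = i by apply: (e_inj hp); lia.
    by move/eqP: hki.
  + case=> [[[k ->] hne]|->]; last by exists i; lia.
    case: (eqVneq k i) => [hki|hki]; first by subst k.
    by exists k; rewrite ho.
Qed.

Lemma vdom lam nu i c : is_partition lam -> is_partition nu ->
  nth 0%N lam i = (nth 0%N nu i).+1 -> nth 0%N lam i.+1 = (nth 0%N nu i.+1).+1 ->
  nth 0%N nu i = nth 0%N nu i.+1 ->
  (forall k, k != i -> k != i.+1 -> nth 0%N lam k = nth 0%N nu k) ->
  let x := (nth 0%N lam i)%:Z - i%:Z + c in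
  ~ S lam c (x - 2) /\ forall y, S nu c y <-> moved (S lam c) x 2 y.
Proof.
move=> hp hn hi hi1 he ho x; subst x; split.
- case=> k hk.
  case: (ltngtP k i.+1) => hki.
  + by have := e_le hp (_ : (k <= i)%N); lia.
  + have hg := part_mono hn hki.
    have hk' : k != i by rewrite neq_ltn (ltn_trans _ hki) ?orbT.
    have hk'' : k != i.+1 by rewrite neq_ltn hki orbT.
    rewrite (ho _ hk' hk'') in hk.
    have := part_nth hn i.+1; lia.
  + by subst k; lia.
- move=> y; split.
  + case=> k ->; case: (eqVneq k i) => [->|hki].
      left; split; first by exists i.+1; lia.
      lia.
    case: (eqVneq k i.+1) => [->|hki1]; first by right; lia.
    left; split; first by exists k; rewrite ho.
    rewrite -ho // => h; have : k = i by apply: (e_inj hp); lia.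
    by move/eqP: hki.
  + case=> [[[k ->] hne]|->]; last by exists i.+1; lia.
    case: (eqVneq k i) => [hki|hki]; first by subst k.
    case: (eqVneq k i.+1) => [hki1|hki1]; first by subst k; exists i; lia.
    by exists k; rewrite ho.
Qed.

Lemma doms lam nu c : remove_domino lam nu ->
  exists x, S lam c x /\ ~ S lam c (x - 2) /\ forall y, S nu c y <-> moved (S lam c) x 2 y.
Proof.
case=> hp [hn [i [[h1 h2]|[h1 [h2 [h3 h4]]]]]].
- have [] := hdom c hp hn h1 h2; eexists; split; [by exists i|split; eassumption].
- have [] := vdom c hp hn h1 h2 h3 h4; eexists; split; [by exists i|split; eassumption].
Qed.

Lemma nthpart (l : seq nat) : (forall k, (nth 0%N l k.+1 <= nth 0%N l k)%N) ->
  is_partition [seq x <- l | (0 < x)%N] /\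
  forall k, nth 0%N [seq x <- l | (0 < x)%N] k = nth 0%N l k.
Proof.
move=> h; have hs : sorted geq l by apply/sortedP_geq.
by split; [apply: fpos_part|apply: fpos_nth].
Qed.

Lemma S_dec_b lam c x : S lam c x \/ ~ S lam c x.
Proof.
case: (boolP (in_symbolb lam c x)) => h; first by left; apply/in_symbolbE.
by right => /in_symbolbE h'; rewrite h' in h.
Qed.

Ltac decide_ifs := repeat match goal with |- context [if ?b then _ else _] => case: (boolP b) => /eqP ? end.

Lemma move2 lam c x : is_partition lam -> S lam c x -> ~ S lam c (x - 2) ->
  exists nu, remove_domino lam nu /\ is_partition nu /\
     forall y, S nu c y <-> moved (S lam c) x 2 y.
Proof.
move=> hp [i ->] hn2.
have hfi1 := part_nth hp i.
case: (S_dec_b lam c ((nth 0%N lam i)%:Z - i%:Z + c - 1)) => hn1.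
-
  case: hn1 => k hk.
  have hk1 : k = i.+1.
    case: (ltngtP k i.+1) => hki //.
    + by have := e_le hp (_ : (k <= i)%N); lia.
    + have := e_lt hp hki; have := e_lt hp (ltnSn i); lia.
  subst k.
  have h2 : (nth 0%N lam i.+2 < nth 0%N lam i)%N.
    have := part_nth hp i.+1 => hh.
    case: (ltnP (nth 0%N lam i.+2) (nth 0%N lam i)) => // hge.
    by case: hn2; exists i.+2; lia.
  set l := set_nth 0%N (set_nth 0%N lam i (nth 0%N lam i).-1) i.+1 (nth 0%N lam i).-1.
  have hl : forall k, nth 0%N l k = if k == i.+1 then (nth 0%N lam i).-1
                               else if k == i then (nth 0%N lam i).-1 else nth 0%N lam k.
    by move=> k; rewrite /l nth_set_nth /= nth_set_nth.
  have [hnu hnth] : is_partition [seq x <- l | (0 < x)%N] /\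
     forall k, nth 0%N [seq x <- l | (0 < x)%N] k = nth 0%N l k.
    apply: nthpart => k; rewrite !hl.
    have := part_nth hp k.
    by decide_ifs; try subst; lia.
  set nu := [seq x <- l | (0 < x)%N] in hnu hnth *.
  have v1 : nth 0%N lam i = (nth 0%N nu i).+1 by rewrite hnth hl; decide_ifs; lia.
  have v2 : nth 0%N lam i.+1 = (nth 0%N nu i.+1).+1 by rewrite hnth hl; decide_ifs; lia.
  have v3 : nth 0%N nu i = nth 0%N nu i.+1 by rewrite !hnth !hl; decide_ifs; lia.
  have v4 : forall k, k != i -> k != i.+1 -> nth 0%N lam k = nth 0%N nu k.
    by move=> k hk1 hk2; rewrite hnth hl; decide_ifs; try lia; move/eqP: hk1; move/eqP: hk2.
  have [_ hh] := vdom c hp hnu v1 v2 v3 v4.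
  exists nu; split; last by split.
  by split=> //; split=> //; exists i; right.
- have hne1 : nth 0%N lam i.+1 != nth 0%N lam i.
    by apply/eqP => e; apply: hn1; exists i.+1; lia.
  have hne2 : (nth 0%N lam i.+1).+1 != nth 0%N lam i.
    by apply/eqP => e; apply: hn2; exists i.+1; lia.
  set l := set_nth 0%N lam i (nth 0%N lam i - 2)%N.
  have hl : forall k, nth 0%N l k = if k == i then (nth 0%N lam i - 2)%N else nth 0%N lam k.
    by move=> k; rewrite /l nth_set_nth.
  have [hnu hnth] : is_partition [seq x <- l | (0 < x)%N] /\
     forall k, nth 0%N [seq x <- l | (0 < x)%N] k = nth 0%N l k.
    apply: nthpart => k; rewrite !hl.
    have := part_nth hp k.
    by decide_ifs; try subst; lia.
  set nu := [seq x <- l | (0 < x)%N] in hnu hnth *.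
  have v1 : nth 0%N lam i = (nth 0%N nu i).+2 by rewrite hnth hl; decide_ifs; lia.
  have v2 : forall k, k != i -> nth 0%N lam k = nth 0%N nu k.
    by move=> k hk1; rewrite hnth hl; decide_ifs; try lia; move/eqP: hk1.
  have [_ hh] := hdom c hp hnu v1 v2.
  exists nu; split; last by split.
  by split=> //; split=> //; exists i; left.
Qed.


Lemma nth_le_sumn (s : seq nat) i : (nth 0%N s i <= sumn s)%N.
Proof.
elim: s i => [|a s IH] [|i] //=; first exact: leq_addr.
exact: leq_trans (IH i) (leq_addl _ _).
Qed.

Lemma sumn_fpos (l : seq nat) : sumn [seq x <- l | (0 < x)%N] = sumn l.
Proof. by elim: l => [//|a l IH] /=; case: (posnP a) => [->|h] /=; rewrite IH. Qed.

Lemma move1 al a w : is_partition al -> S al a w -> ~ S al a (w - 1) ->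
  exists ga, is_partition ga /\ (sumn ga < sumn al)%N /\
    forall y, S ga a y <-> moved (S al a) w 1 y.
Proof.
move=> hp [i ->] hn.
have hfi1 := part_nth hp i.
have hne : nth 0%N al i.+1 != nth 0%N al i.
  by apply/eqP => e; apply: hn; exists i.+1; lia.
set l := set_nth 0%N al i (nth 0%N al i - 1)%N.
have hl : forall k, nth 0%N l k = if k == i then (nth 0%N al i - 1)%N else nth 0%N al k.
  by move=> k; rewrite /l nth_set_nth.
have [hnu hnth] : is_partition [seq x <- l | (0 < x)%N] /\
   forall k, nth 0%N [seq x <- l | (0 < x)%N] k = nth 0%N l k.
  apply: nthpart => k; rewrite !hl.
  have := part_nth hp k.
  by decide_ifs; try subst; lia.
have hsum : (sumn [seq x <- l | (0 < x)%N] < sumn al)%N.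
  rewrite sumn_fpos /l sumn_set_nth0.
  have := nth_le_sumn al i; lia.
set ga := [seq x <- l | (0 < x)%N] in hnu hnth hsum *.
exists ga; split=> //; split=> // y; split.
- case=> k ->; rewrite hnth hl; decide_ifs.
  + subst k; right; lia.
  + left; split; first by exists k.
    move=> h; have : k = i by apply: (e_inj hp); lia.
    done.
- case=> [[[k ->] hne2]|->].
  + case: (eqVneq k i) => [hki|hki]; first by subst k.
    by exists k; rewrite hnth hl (negbTE hki).
  + by exists i; rewrite hnth hl eqxx; lia.
Qed.

Definition runners lam c al a be b :=
  (forall w, S lam c (2 * w) <-> S al a w) /\ (forall w, S lam c (2 * w + 1) <-> S be b w).

Lemma runners_eq lam c lam' c' al a be b :
  runners lam c al a be b -> runners lam' c' al a be b ->
  forall x, S lam c x <-> S lam' c' x.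
Proof.
move=> [h0 h1] [h0' h1'] x.
have [m [[-> _]|[-> _]]] := int_par x.
- by rewrite h0 h0'.
- by rewrite h1 h1'.
Qed.

Lemma last_bead al a : is_partition al -> al != [::] ->
  exists w, S al a w /\ ~ S al a (w - 1).
Proof.
move=> hp hne; set i := (size al).-1.
have hi : (i < size al)%N by rewrite /i; case: (al) hne.
have hpos := part_pos hp hi.
have hi1 : nth 0%N al i.+1 = 0%N by rewrite nth_default // /i; case: (al) hne.
exists ((nth 0%N al i)%:Z - i%:Z + a); split; first by exists i.
case=> k hk.
case: (leqP k i) => hki.
- by have := e_le hp hki; lia.
- have := part_mono hp hki; rewrite hi1; lia.
Qed.

Lemma moved_even (P Q : int -> Prop) w x :
  (forall y, P (2 * y) <-> Q y) -> x = 2 * w ->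
  forall y, moved P x 2 (2 * y) <-> moved Q w 1 y.
Proof.
move=> h -> y; rewrite /moved h; split.
- case=> [[hq hne]|he]; [left; split=> //; lia|right; lia].
- case=> [[hq hne]|he]; [left; split=> //; lia|right; lia].
Qed.

Lemma moved_even_other (P Q : int -> Prop) w x :
  (forall y, P (2 * y + 1) <-> Q y) -> x = 2 * w ->
  forall y, moved P x 2 (2 * y + 1) <-> Q y.
Proof.
move=> h -> y; rewrite /moved h; split.
- by case=> [[hq hne]//|he]; lia.
- by move=> hq; left; split=> //; lia.
Qed.

Lemma moved_odd (P Q : int -> Prop) w x :
  (forall y, P (2 * y + 1) <-> Q y) -> x = 2 * w + 1 ->
  forall y, moved P x 2 (2 * y + 1) <-> moved Q w 1 y.
Proof.
move=> h -> y; rewrite /moved h; split.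
- case=> [[hq hne]|he]; [left; split=> //; lia|right; lia].
- case=> [[hq hne]|he]; [left; split=> //; lia|right; lia].
Qed.

Lemma moved_odd_other (P Q : int -> Prop) w x :
  (forall y, P (2 * y) <-> Q y) -> x = 2 * w + 1 ->
  forall y, moved P x 2 (2 * y) <-> Q y.
Proof.
move=> h -> y; rewrite /moved h; split.
- by case=> [[hq hne]//|he]; lia.
- by move=> hq; left; split=> //; lia.
Qed.

Lemma chain m lam c al a be b : (sumn al + sumn be <= m)%N ->
  is_partition lam -> is_partition al -> is_partition be ->
  runners lam c al a be b ->
  exists nu, domino_reach lam nu /\ is_partition nu /\ runners nu c [::] a [::] b.
Proof.
elim: m lam al be => [|m IH] lam al be hm hp hal hbe [h0 h1].
- have eal : al = [::].
    case: al hal hm {h0} => // x al /andP[_] /= /andP[hx _]; lia.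
  have ebe : be = [::].
    case: be hbe hm {h1} => // x be /andP[_] /= /andP[hx _]; lia.
  by subst; exists lam; split; [constructor|split=> //; split].
- case: (eqVneq al [::]) => [eal|neal].
  + case: (eqVneq be [::]) => [ebe|nebe].
      by subst; exists lam; split; [constructor|split=> //; split].
    have [w [hw hw1]] := last_bead b hbe nebe.
    have [ga [hga [hsum hmv]]] := move1 hbe hw hw1.
    have hx : S lam c (2 * w + 1) by apply/h1.
    have hx2 : ~ S lam c (2 * w + 1 - 2).
      by rewrite (_ : 2 * w + 1 - 2 = 2 * (w - 1) + 1); [rewrite h1|lia].
    have [nu [hrd [hnu hS]]] := move2 hp hx hx2.
    have hr : runners nu c al a ga b.
      split=> y; rewrite hS.
      * exact: (moved_odd_other h0).
      * rewrite (moved_odd h1) // hmv //.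
    have hm' : (sumn al + sumn ga <= m)%N by lia.
    have [nu' [hr' rest]] := IH nu al ga hm' hnu hal hga hr.
    exists nu'; split=> //; exact: dr_step hrd hr'.
  + have [w [hw hw1]] := last_bead a hal neal.
    have [ga [hga [hsum hmv]]] := move1 hal hw hw1.
    have hx : S lam c (2 * w) by apply/h0.
    have hx2 : ~ S lam c (2 * w - 2).
      by rewrite (_ : 2 * w - 2 = 2 * (w - 1)); [rewrite h0|lia].
    have [nu [hrd [hnu hS]]] := move2 hp hx hx2.
    have hr : runners nu c ga a be b.
      split=> y; rewrite hS.
      * rewrite (moved_even h0) // hmv //.
      * exact: (moved_even_other h1).
    have hm' : (sumn ga + sumn be <= m)%N by lia.
    have [nu' [hr' rest]] := IH nu ga be hm' hnu hga hbe hr.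
    exists nu'; split=> //; exact: dr_step hrd hr'.
Qed.

Lemma reach_runners lam nu : domino_reach lam nu ->
  forall c al a be b, is_partition al -> is_partition be -> runners lam c al a be b ->
  exists al' be', is_partition al' /\ is_partition be' /\ runners nu c al' a be' b.
Proof.
elim=> [l|l m n hrd _ IH] c al a be b hal hbe [h0 h1].
  by exists al, be.
have [x [hx [hx2 hS]]] := doms c hrd.
have [w [[ew _]|[ew _]]] := int_par x.
- have hw : S al a w by apply/h0; rewrite -ew.
  have hw1 : ~ S al a (w - 1).
    by rewrite -h0 (_ : 2 * (w - 1) = x - 2); [|lia].
  have [ga [hga [_ hmv]]] := move1 hal hw hw1.
  apply: (IH c ga a be b) => //; split=> y; rewrite hS.
  + rewrite (moved_even h0 ew) hmv //.
  + exact: (moved_even_other h1 ew).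
- have hw : S be b w by apply/h1; rewrite -ew.
  have hw1 : ~ S be b (w - 1).
    by rewrite -h1 (_ : 2 * (w - 1) + 1 = x - 2); [|lia].
  have [ga [hga [_ hmv]]] := move1 hbe hw hw1.
  apply: (IH c al a ga b) => //; split=> y; rewrite hS.
  + exact: (moved_odd_other h0 ew).
  + rewrite (moved_odd h1 ew) hmv //.
Qed.

Lemma nth_Delta t k : nth 0%N (Delta t) k = (t - k)%N.
Proof.
rewrite /Delta; case: (ltnP k t) => hk.
- by rewrite (nth_map 0%N) ?size_iota // nth_iota.
- by rewrite nth_default ?size_map ?size_iota //; lia.
Qed.

Lemma Delta_part t : is_partition (Delta t).
Proof.
apply/andP; split.
- by apply/sortedP_geq => k; rewrite !nth_Delta; lia.
- by apply/allP => x /mapP [i]; rewrite mem_iota => hi ->; lia.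
Qed.

Lemma delta_runners t : runners (Delta t) (t%:Z + 1) [::] 0 [::] t%:Z.
Proof.
split=> w; rewrite S_nil.
- split.
  + by case=> k; rewrite nth_Delta; lia.
  + move=> hw; exists (absz (t%:Z + 1 - 2 * w)%R); rewrite nth_Delta; lia.
- split.
  + by case=> k; rewrite nth_Delta; lia.
  + move=> hw; case: (boolP (0 <= w)) => h0.
    * exists (absz (t%:Z - w)%R); rewrite nth_Delta; lia.
    * exists (absz (t%:Z - 2 * w)%R); rewrite nth_Delta; lia.
Qed.

Lemma nocore t nu : ~ remove_domino (Delta t) nu.
Proof.
case=> _ [hn [i [[h1 h2]|[h1 [h2 [h3 h4]]]]]].
- have := h2 i.+1; rewrite (_ : (i.+1 != i) = true) ?neq_ltn ?ltnSn ?orbT // => h.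
  have := part_nth hn i; move: h1 h; rewrite !nth_Delta; lia.
- move: h1 h2 h3; rewrite !nth_Delta; lia.
Qed.

Lemma S_diff' lam c x c' x' : S lam c x -> c - x = c' - x' -> S lam c' x'.
Proof. by move=> h e; apply: (proj1 (S_diff lam e)). Qed.

Section Ab.
Variables (e t : nat) (mu1 mu2 : seq nat).
Hypothesis he : odd e.

Let A := abacus_eb e (mu1, mu2) ((t%:Z - (e./2)%:Z)%R, 0%R).

Lemma A_even w : A (2 * w) <-> S mu2 0 w.
Proof.
have he2 : e = (e./2).*2.+1 by rewrite -[e in LHS]odd_double_half he.
rewrite /A; split.
- move/abacus_ebP; case=> [[j [_ hj]]|[j [hj hj2]]] /=.
  + lia.
  + by move/in_symbolE: hj; rewrite (_ : w = j) //; lia.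
- move=> h; apply/abacus_ebP; right; exists w; split=> //; exact/in_symbolE.
Qed.

Lemma A_odd w : A (2 * w + 1) <-> S mu1 t w.
Proof.
have he2 : e = (e./2).*2.+1 by rewrite -[e in LHS]odd_double_half he.
rewrite /A; split.
- move/abacus_ebP; case=> [[j [hj hj2]]|[j [_ hj]]] /=.
  + move/in_symbolE: hj => hj; apply: (S_diff' hj) => /=; lia.
  + lia.
- move=> h; apply/abacus_ebP; left; exists (w - (e./2)%:Z); split; last by lia.
  apply/in_symbolE; apply: (S_diff' h) => /=; lia.
Qed.

End Ab.

Lemma runner_maya lam (c : int) r : is_partition lam -> (r = 0 \/ r = 1) ->
  exists al a, is_partition al /\ forall w, S lam c (2 * w + r) <-> S al a w.
Proof.
move=> hp hr.
have := @maya (fun w => in_symbolb lam c (2 * w + r))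
  (- (size lam)%:Z + c - 2 - `|c|) ((nth 0%N lam 0)%:Z + `|c| + 2).
case.
- lia.
- move=> x hx; apply/in_symbolbE; apply: S_low; lia.
- move=> x hx; apply/negP => /in_symbolbE h; have := S_max hp h; lia.
move=> al [a [hal h]]; exists al, a; split=> // w.
by rewrite h; split => /in_symbolbE.
Qed.

Lemma A_1runner e t mu1 mu2 : odd e -> is_partition mu1 -> is_partition mu2 ->
  exists n, is_1runner_abacus (abacus_eb e (mu1, mu2) ((t%:Z - (e./2)%:Z)%R, 0%R)) n.
Proof.
move=> he hp1 hp2.
exists (2 * (size mu1 + size mu2 + sumn mu1 + sumn mu2 + t) + 2)%N; split; first lia.
move=> j hj.
have h01 := nth_le_sumn mu1 0; have h02 := nth_le_sumn mu2 0.
split.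
- have [w [[ew _]|[ew _]]] := int_par (- j%:Z); rewrite ew.
  + apply/(A_even t mu1 mu2 he); apply: S_low; lia.
  + apply/(A_odd t mu1 mu2 he); apply: S_low; lia.
- apply/negP; have [w [[ew _]|[ew _]]] := int_par (j%:Z); rewrite ew.
  + by move/(A_even t mu1 mu2 he) => h; have := S_max hp2 h; lia.
  + by move/(A_odd t mu1 mu2 he) => h; have := S_max hp1 h; lia.
Qed.

Lemma bar_runners t lam al be : is_partition lam -> is_partition al -> is_partition be ->
  forall a b, runners lam (t%:Z + 1) al a be b -> bar_quot2 t lam = (be, al).
Proof.
move=> hp hal hbe a b [h0 h1].
rewrite /bar_quot2 (quot_runners hp hal hbe h0 h1).
have -> : odd `|t%:Z + 1| = ~~ odd t by lia.
by case: (odd t).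
Qed.

Lemma runner_uniq lam c al a be b al' a' be' b' :
  is_partition al -> is_partition be -> is_partition al' -> is_partition be' ->
  runners lam c al a be b -> runners lam c al' a' be' b' ->
  [/\ al = al', a = a', be = be' & b = b'].
Proof.
move=> h1 h2 h3 h4 [r0 r1] [r0' r1'].
have [e1 e2] := S_inj (c := a) (c' := a') h1 h3 (fun w => iff_trans (iff_sym (r0 w)) (r0' w)).
have [e3 e4] := S_inj (c := b) (c' := b') h2 h4 (fun w => iff_trans (iff_sym (r1 w)) (r1' w)).
by split.
Qed.

Local Close Scope ring_scope.
Unset Implicit Arguments.

Theorem lemma7p2 (e t : nat) (mu1 mu2 : seq nat) :
  odd e -> (1 < e)%N -> is_partition mu1 -> is_partition mu2 ->
  let A := abacus_eb e (mu1, mu2) ((t%:Z - (e./2)%:Z)%R, 0%R) in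
  (exists n, is_1runner_abacus A n) /\
  forall n, is_1runner_abacus A n ->
    [/\ is_partition (abacus_partition A n),
        Phi_spec t (mu1, mu2) (abacus_partition A n)
      & forall lam, is_partition lam -> Phi_spec t (mu1, mu2) lam ->
          lam = abacus_partition A n].
Proof.
move=> he he1 hp1 hp2 A; split; first exact: A_1runner.
move=> n hn.
have [hp0 hS0] := abacus_S hn.
set lam0 := abacus_partition A n in hp0 hS0 *.
set c0 := (_ - 1)%R in hS0.
have hr0 : runners lam0 c0 mu2 0 mu1 t.
  by split=> w; rewrite hS0; [exact: A_even|exact: A_odd].
have [nu [hreach [hnu hrnu]]] := chain (leqnn _) hp0 hp2 hp1 hr0.
have [enu ec0] := S_inj hnu (Delta_part t) (runners_eq hrnu (delta_runners t)).
subst nu.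
rewrite ec0 in hr0.
have hbar0 := bar_runners hp0 hp2 hp1 hr0.
split=> //.
- split=> //; split=> //; exact: nocore.
- move=> lam hp [[hreach' _] hq].
  have [al [a [hal h0]]] := runner_maya (t%:Z + 1) hp (or_introl erefl).
  have [be [b [hbe h1]]] := runner_maya (t%:Z + 1) hp (or_intror erefl).
  have hr : runners lam (t%:Z + 1) al a be b.
    by split=> w; [rewrite -h0 addr0|rewrite -h1].
  have [al' [be' [hal' [hbe' hr']]]] := reach_runners hreach' hal hbe hr.
  have hnil : is_partition [::] by [].
  have [_ ea _ eb] := runner_uniq hal' hbe' hnil hnil hr' (delta_runners t).
  subst a b.
  have := bar_runners hp hal hbe hr; rewrite hq => -[e1 e2].
  subst al be.
  by have [-> _] := S_inj hp hp0 (runners_eq hr hr0).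
Qed.
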